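(* Let $\mathcal{X}\in\mathbb{R}^{n_1\times n_2\times n_3}$, let $q\in\mathbb{N}$, and let $\mathcal{B}\in\mathbb{R}^{n_2\times s\times n_3}$ (in the algorithm, a Gaussian random tensor). Form $$\mathcal{K}=[\mathcal{X}*\mathcal{B},\ (\mathcal{X}*\mathcal{X}^\top)*\mathcal{X}*\mathcal{B},\ \ldots,\ (\mathcal{X}*\mathcal{X}^\top)^{q}*\mathcal{X}*\mathcal{B}]$$ and let $\mathcal{Q}\in\mathbb{R}^{n_1\times m\times n_3}$ be the orthonormal factor of a T-QR factorization $\mathcal{K}=\mathcal{Q}*\mathcal{R}$, so that $\mathcal{Q}^\top*\mathcal{Q}=\mathcal{I}$. Put $\mathcal{P}_k=\mathcal{Q}*\mathcal{Q}^\top$ and $$\mathcal{Z}=[\mathcal{X},\ (\mathcal{X}*\mathcal{X}^\top)*\mathcal{X},\ \ldots,\ (\mathcal{X}*\mathcal{X}^\top)^{q}*\mathcal{X}]\in\mathbb{R}^{n_1\times n_2(q+1)\times n_3}.$$ Then $$\|(\mathcal{I}-\mathcal{Q}*\mathcal{Q}^\top)*\mathcal{X}\|_2\le \|(\mathcal{I}-\mathcal{P}_k)*\mathcal{Z}\|_2^{\frac{1}{2q+1}}.$$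
   Context: For a real third-order tensor $\mathcal{X}\in\mathbb{R}^{n_1\times n_2\times n_3}$ let $X^{(1)},\dots,X^{(n_3)}$ be its frontal slices ($X^{(k)}=\mathcal{X}(:,:,k)$). - $\mathtt{bcirc}(\mathcal{X})\in\mathbb{R}^{n_1n_3\times n_2n_3}$ is the block circulant matrix whose first block column is $X^{(1)},X^{(2)},\dots,X^{(n_3)}$, each subsequent block column being the cyclic downward shift of the previous one. - $\mathtt{unfold}(\mathcal{X})$ stacks the frontal slices vertically into an $n_1n_3\times n_2$ matrix, and $\mathtt{fold}$ is its inverse. - The T-product of $\mathcal{X}\in\mathbb{R}^{n_1\times n_2\times n_3}$ and $\mathcal{Y}\in\mathbb{R}^{n_2\times n_4\times n_3}$ is $\mathcal{X}*\mathcal{Y}=\mathtt{fold}(\mathtt{bcirc}(\mathcal{X})\,\mathtt{unfold}(\mathcal{Y}))\in\mathbb{R}^{n_1\times n_4\times n_3}$. - The transpose $\mathcal{X}^\top\in\mathbb{R}^{n_2\times n_1\times n_3}$ has frontal slices $(X^{(1)})^\top$ and, for $k=2,\dots,n_3$, $\mathcal{X}^\top(:,:,k)=(X^{(n_3+2-k)})^\top$. - The identity tensor $\mathcal{I}$ (of size $n\times n\times n_3$) has first frontal slice $I_n$ and all other frontal slices zero. Powers are $\mathcal{A}^j=\mathcal{A}*\cdots*\mathcal{A}$ ($j$ factors), with $\mathcal{A}^0=\mathcal{I}$. - The spectral norm is $\|\mathcal{X}\|_2=\|\mathtt{bcirc}(\mathcal{X})\|_2$. - $[\mathcal{A}_1,\ldots,\mathcal{A}_r]$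 denotes concatenation along the second mode: tensors with the same first and third dimensions have their frontal slices concatenated horizontally. - A T-QR factorization of $\mathcal{K}$ is computed by applying the fast Fourier transform along the third mode, taking a QR factorization of each frontal slice, and transforming back. It yields $\mathcal{K}=\mathcal{Q}*\mathcal{R}$ with $\mathcal{Q}^\top*\mathcal{Q}=\mathcal{I}$ and $\mathcal{R}$ having upper triangular frontal slices. *)

(* Defs.v *)
From HB Require Import structures.
From mathcomp Require Import all_boot all_order all_algebra.
From mathcomp Require Import classical_sets reals exp.
Set Implicit Arguments. Unset Strict Implicit. Unset Printing Implicit Defensive.
Import Order.TTheory GRing.Theory Num.Theory.
Local Open Scope ring_scope.

(* A real third-order tensor n1 x n2 x n3, given by its frontal slices
   X^(1), ..., X^(n3) (0-based here: X k for k : 'I_n3). *)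
Definition tensor (R : Type) (n1 n2 n3 : nat) := 'I_n3 -> 'M[R]_(n1, n2).

Lemma ord_pos n (i : 'I_n) : (0 < n)%N.
Proof. by apply: leq_ltn_trans (ltn_ord i). Qed.

Definition csub n (i j : 'I_n) : 'I_n :=
  Ordinal (ltn_pmod (i + n - j) (ord_pos i)).
(* (n - k) mod n : the 0-based index of slice k of the transpose *)
Definition cneg n (k : 'I_n) : 'I_n :=
  Ordinal (ltn_pmod (n - k) (ord_pos k)).

Section Tensors.
Variable R : realType.

Definition bcirc n1 n2 n3 (X : tensor R n1 n2 n3) :
  'M[R]_(\sum_(i < n3) n1, \sum_(j < n3) n2) :=
  mxblock (fun i j : 'I_n3 => X (csub i j)).

Definition tunfold n1 n2 n3 (X : tensor R n1 n2 n3) :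
  'M[R]_(\sum_(i < n3) n1, n2) := mxcol (fun i : 'I_n3 => X i).

Definition tfold n1 n2 n3 (M : 'M[R]_(\sum_(i < n3) n1, n2)) : tensor R n1 n2 n3 :=
  fun i => submxcol M i.

Definition tprod n1 n2 n4 n3 (X : tensor R n1 n2 n3) (Y : tensor R n2 n4 n3) :
  tensor R n1 n4 n3 := tfold (bcirc X *m tunfold Y).

Definition ttr n1 n2 n3 (X : tensor R n1 n2 n3) : tensor R n2 n1 n3 :=
  fun k => (X (cneg k))^T.

Definition tid n n3 : tensor R n n n3 :=
  fun k => if (k == 0 :> nat) then 1%:M else 0.

Definition tsub n1 n2 n3 (X Y : tensor R n1 n2 n3) : tensor R n1 n2 n3 :=
  fun k => X k - Y k.

Fixpoint tpow n n3 (A : tensor R n n n3) (j : nat) : tensor R n n n3 :=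
  match j with
  | O => @tid n n3
  | S j' => tprod A (tpow A j')
  end.

Definition tcat n1 n2 n3 r (A : 'I_r -> tensor R n1 n2 n3) :
  tensor R n1 (\sum_(j < r) n2) n3 :=
  fun k => mxrow (fun j : 'I_r => A j k).

Definition vnorm n (v : 'cV[R]_n) : R := Num.sqrt (\sum_i v i 0 ^+ 2).

Definition mspec m n (A : 'M[R]_(m, n)) : R :=
  sup [set vnorm (A *m v) | v in [set v : 'cV[R]_n | vnorm v <= 1]].

Definition tspec n1 n2 n3 (X : tensor R n1 n2 n3) : R := mspec (bcirc X).

Definition upper_slices m p n3 (T : tensor R m p n3) : Prop :=
  forall k (i : 'I_m) (j : 'I_p), (j < i)%N -> T k i j = 0.

End Tensors.

(* Main.v *)
Require Import Defs.
From HB Require Import structures.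
From mathcomp Require Import all_boot all_order all_algebra.
From mathcomp Require Import classical_sets reals exp.
From mathcomp Require Import ring lra.
Import Order.TTheory GRing.Theory Num.Theory.
Set Implicit Arguments. Unset Strict Implicit. Unset Printing Implicit Defensive.
Local Open Scope ring_scope.

Section Vec.
Variable R : realType.

Definition dot n (u v : 'cV[R]_n) : R := \sum_i u i 0 * v i 0.

Lemma dotC n (u v : 'cV[R]_n) : dot u v = dot v u.
Proof. by apply: eq_bigr => i _; rewrite mulrC. Qed.

Lemma dot_ge0 n (u : 'cV[R]_n) : 0 <= dot u u.
Proof. by apply: sumr_ge0 => i _; rewrite -expr2 sqr_ge0. Qed.

Lemma vnorm_ge0 n (u : 'cV[R]_n) : 0 <= vnorm u.
Proof. exact: sqrtr_ge0. Qed.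

Lemma vnorm_sq n (u : 'cV[R]_n) : vnorm u ^+ 2 = dot u u.
Proof.
rewrite /vnorm sqr_sqrtr; last by apply: sumr_ge0 => i _; rewrite sqr_ge0.
by apply: eq_bigr => i _; rewrite expr2.
Qed.

Lemma dot_mull n m (A : 'M[R]_(n, m)) u v : dot (A *m u) v = dot u (A^T *m v).
Proof.
rewrite /dot.
under eq_bigr do rewrite mxE big_distrl /=.
rewrite exchange_big /=; apply: eq_bigr => j _.
rewrite mxE big_distrr /=; apply: eq_bigr => i _.
by rewrite mxE; ring.
Qed.

Lemma dotDl n (u u' v : 'cV[R]_n) : dot (u + u') v = dot u v + dot u' v.
Proof. by rewrite /dot -big_split; apply: eq_bigr => i _; rewrite mxE mulrDl. Qed.

Lemma dotZl n a (u v : 'cV[R]_n) : dot (a *: u) v = a * dot u v.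
Proof. by rewrite /dot big_distrr /=; apply: eq_bigr => i _; rewrite !mxE mulrA. Qed.

Lemma dotNl n (u v : 'cV[R]_n) : dot (- u) v = - dot u v.
Proof. by rewrite -scaleN1r dotZl mulN1r. Qed.

Lemma dotDr n (u v v' : 'cV[R]_n) : dot u (v + v') = dot u v + dot u v'.
Proof. by rewrite dotC dotDl !(dotC u). Qed.

Lemma dotZr n a (u v : 'cV[R]_n) : dot u (a *: v) = a * dot u v.
Proof. by rewrite dotC dotZl dotC. Qed.

Lemma dotNr n (u v : 'cV[R]_n) : dot u (- v) = - dot u v.
Proof. by rewrite dotC dotNl dotC. Qed.

Lemma dot0 n (u : 'cV[R]_n) : dot u u = 0 -> u = 0.
Proof.
move=> H; apply/matrixP => i j; rewrite (ord1 j) mxE.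
have /psumr_eq0P H2 : \sum_i u i 0 * u i 0 = 0 by [].
apply/eqP; rewrite -sqrf_eq0 expr2; apply/eqP; apply: H2 => // k _.
by rewrite -expr2 sqr_ge0.
Qed.

Lemma CS n (u v : 'cV[R]_n) : dot u v ^+ 2 <= dot u u * dot v v.
Proof.
have H t : 0 <= dot u u - 2 * t * dot u v + t ^+ 2 * dot v v.
  have := dot_ge0 (u - t *: v).
  rewrite dotDl !dotDr !dotNl !dotNr !dotZl !dotZr (dotC v u).
  move=> h; nra.
have [vv0|vvp] := eqVneq (dot v v) 0.
  have -> : dot u v = 0.
    by rewrite (dot0 vv0) /dot big1 // => i _; rewrite mxE mulr0.
  by rewrite vv0 expr0n mulr0.
have vvgt : 0 < dot v v by rewrite lt_neqAle eq_sym vvp dot_ge0.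
have := H (dot u v / dot v v).
set a := dot u u; set b := dot u v; set c := dot v v => h.
have : 0 <= (a - 2 * (b / c) * b + (b / c) ^+ 2 * c) * c by rewrite mulr_ge0 // ltW.
have -> : (a - 2 * (b / c) * b + (b / c) ^+ 2 * c) * c = a * c - b ^+ 2.
  by field; rewrite /c.
by rewrite subr_ge0.
Qed.

Lemma CSn n (u v : 'cV[R]_n) : dot u v <= vnorm u * vnorm v.
Proof.
have [h|h] := lerP (dot u v) 0.
  by apply: le_trans h _; rewrite mulr_ge0 // vnorm_ge0.
have H2 : dot u v ^+ 2 <= (vnorm u * vnorm v) ^+ 2 by rewrite exprMn !vnorm_sq CS.
by move: H2; rewrite ler_pXn2r // ?nnegrE ?(ltW h) ?mulr_ge0 ?vnorm_ge0.
Qed.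


Lemma vnormE n (u : 'cV[R]_n) : vnorm u = Num.sqrt (dot u u).
Proof. by rewrite /vnorm /dot; congr Num.sqrt; apply: eq_bigr => i _; rewrite expr2. Qed.

Lemma vnorm_eq0 n (u : 'cV[R]_n) : vnorm u = 0 -> u = 0.
Proof. by move=> h; apply: dot0; rewrite -vnorm_sq h expr0n. Qed.

Lemma vnormZ n a (u : 'cV[R]_n) : vnorm (a *: u) = `|a| * vnorm u.
Proof. by rewrite !vnormE dotZl dotZr mulrA -expr2 sqrtrM ?sqr_ge0 // sqrtr_sqr. Qed.

Lemma vnorm_iso n m (E : 'M[R]_(n, m)) u : E^T *m E = 1%:M -> vnorm (E *m u) = vnorm u.
Proof. by move=> h; rewrite !vnormE dot_mull mulmxA h mul1mx. Qed.

Lemma vnorm0 n : vnorm (0 : 'cV[R]_n) = 0.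
Proof. by rewrite vnormE /dot big1 ?sqrtr0 // => i _; rewrite mxE mul0r. Qed.

Definition mset m n (B : 'M[R]_(m, n)) :=
  image (mkset (fun v : 'cV[R]_n => vnorm v <= 1)) (fun v => vnorm (B *m v)).

Lemma mset_has_sup m n (B : 'M[R]_(m, n)) : has_sup (mset B).
Proof.
split.
  exists 0; exists 0; first by rewrite /= vnorm0.
  by rewrite mulmx0 vnorm0.
exists (1 + \sum_i dot (row i B)^T (row i B)^T).
move=> x [v /= hv <-].
set y := vnorm (B *m v).
have h1 : y ^+ 2 <= \sum_i dot (row i B)^T (row i B)^T.
  rewrite /y vnorm_sq /dot; apply: ler_sum => i _.
  have -> : (B *m v) i 0 = dot (row i B)^T v.
    by rewrite !mxE /dot; apply: eq_bigr => j _; rewrite !mxE.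
  apply: le_trans (CS _ _) _.
  rewrite ler_piMr ?dot_ge0 // -vnorm_sq.
  by rewrite expr_le1 // vnorm_ge0.
have h2 : y <= 1 + y ^+ 2 by nra.
exact: le_trans h2 (lerD (lexx 1) h1).
Qed.

Lemma mspec_ub m n (B : 'M[R]_(m, n)) v : vnorm v <= 1 -> vnorm (B *m v) <= mspec B.
Proof. by move=> hv; apply: sup_upper_bound (mset_has_sup B) _ _; exists v. Qed.

Lemma mspec_ge0 m n (B : 'M[R]_(m, n)) : 0 <= mspec B.
Proof.
by apply: le_trans (mspec_ub B (_ : vnorm (0 : 'cV_n) <= 1)); rewrite ?mulmx0 vnorm0.
Qed.

Lemma mspec_le m n (B : 'M[R]_(m, n)) c :
  (forall v, vnorm v <= 1 -> vnorm (B *m v) <= c) -> mspec B <= c.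
Proof.
move=> h; apply: ge_sup.
  by exists (vnorm (B *m 0)); exists 0 => //=; rewrite vnorm0.
by move=> x [v /= hv <-]; apply: h.
Qed.

Lemma mspec_hom m n (B : 'M[R]_(m, n)) v : vnorm (B *m v) <= mspec B * vnorm v.
Proof.
have [h0|hp] := eqVneq (vnorm v) 0.
  by rewrite (vnorm_eq0 h0) mulmx0 !vnorm0 mulr0.
have vp : 0 < vnorm v by rewrite lt_neqAle eq_sym hp vnorm_ge0.
have := mspec_ub B (_ : vnorm ((vnorm v)^-1 *: v) <= 1).
rewrite vnormZ ger0_norm ?invr_ge0 ?vnorm_ge0 // mulVf // lexx => /(_ isT).
rewrite -scalemxAr vnormZ ger0_norm ?invr_ge0 ?vnorm_ge0 //.
by rewrite ler_pdivrMl // mulrC.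
Qed.

End Vec.
Lemma csubE n (i j : 'I_n.+1) : csub i j = (i - j)%R.
Proof. apply: val_inj => /=. rewrite modnDmr addnBA //; exact: ltnW (ltn_ord j). Qed.

Lemma cnegE n (i : 'I_n.+1) : cneg i = (- i)%R.
Proof. by apply: val_inj. Qed.

Lemma ord0_false N (i : 'I_N) : N = 0%N -> False.
Proof. by move=> e; move: i; rewrite e => -[]. Qed.

Section T.
Variable R : realType.

Lemma bcirc_mul n1 n2 n4 n3 (X : tensor R n1 n2 n3) (Y : tensor R n2 n4 n3) :
  bcirc (tprod X Y) = bcirc X *m bcirc Y.
Proof.
case: n3 X Y => [|n] X Y.
  by apply/matrixP => i; exfalso; apply: (ord0_false i); rewrite big_ord0.
rewrite /bcirc mul_mxblock /tprod /tfold /tunfold /bcirc mul_mxblock_mxrow.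
apply: eq_mxblock => i j; rewrite mxcolK.
rewrite [RHS](reindex_inj (addIr j)) /=.
apply: eq_bigr => k _; rewrite !csubE addrK; congr (X _ *m _).
by rewrite opprD addrA addrAC.
Qed.

Lemma bcirc_tr n1 n2 n3 (X : tensor R n1 n2 n3) : bcirc (ttr X) = (bcirc X)^T.
Proof.
case: n3 X => [|n] X.
  by apply/matrixP => i; exfalso; apply: (ord0_false i); rewrite big_ord0.
rewrite /bcirc tr_mxblock; apply: eq_mxblock => i j.
by rewrite /ttr cnegE !csubE opprB.
Qed.

Lemma bcirc_tid n n3 : bcirc (@tid R n n3) = 1%:M.
Proof.
case: n3 => [|k].
  by apply/matrixP => i; exfalso; apply: (ord0_false i); rewrite big_ord0.
rewrite -(mxdiagZ 1) /mxdiag /bcirc; apply: eq_mxblock => i j.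
rewrite /tid csubE.
have -> : (nat_of_ord (i - j) == 0%N) = (i == j) by rewrite -subr_eq0.
by case: (i == j) => //; rewrite conform_mx_id.
Qed.

Lemma bcirc_sub n1 n2 n3 (X Y : tensor R n1 n2 n3) :
  bcirc (tsub X Y) = bcirc X - bcirc Y.
Proof. by rewrite /bcirc -mxblockB. Qed.


Lemma ordval0 n (x : 'I_n.+1) : (nat_of_ord x == 0%N) = (x == 0).
Proof. by []. Qed.

Lemma bcirc_ext n1 n2 n3 (X Y : tensor R n1 n2 n3) :
  (forall k, X k = Y k) -> bcirc X = bcirc Y.
Proof. by move=> h; rewrite /bcirc; apply: eq_mxblock => i j; rewrite h. Qed.

Definition mpow N (M : 'M[R]_N) j := iter j (mulmx M) 1%:M.

Lemma bcirc_pow n n3 (A : tensor R n n n3) j : bcirc (tpow A j) = mpow (bcirc A) j.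
Proof.
elim: j => [|j IH] /=; first exact: bcirc_tid.
by rewrite bcirc_mul IH.
Qed.

Definition Ssel n2 q : 'M[R]_(\sum_(j < q.+1) n2, n2) :=
  mxcol (fun j : 'I_q.+1 => (if j == ord_max then 1%:M else 0 : 'M[R]_n2)).

Definition Esel n2 q n3 : tensor R (\sum_(j < q.+1) n2) n2 n3 :=
  fun k => if (k == 0 :> nat) then Ssel n2 q else 0.

Lemma Ssel_iso n2 q : (@Ssel n2 q)^T *m @Ssel n2 q = 1%:M.
Proof.
rewrite /Ssel tr_mxcol mul_mxrow_mxcol (bigD1 ord_max) //= eqxx big1.
  by rewrite trmx1 mul1mx addr0.
by move=> j /negbTE ->; rewrite trmx0 mul0mx.
Qed.

Lemma Ssel_mul n1 n2 q (A : 'I_q.+1 -> 'M[R]_(n1, n2)) :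
  mxrow A *m @Ssel n2 q = A ord_max.
Proof.
rewrite /Ssel mul_mxrow_mxcol (bigD1 ord_max) //= eqxx big1.
  by rewrite mulmx1 addr0.
by move=> j /negbTE ->; rewrite mulmx0.
Qed.

Lemma tcat_sel n1 n2 n3 q (A : 'I_q.+1 -> tensor R n1 n2 n3) k :
  tprod (tcat A) (@Esel n2 q n3) k = A ord_max k.
Proof.
case: n3 A k => [|n] A k; first by case: k.
rewrite /tprod /tfold /bcirc /tunfold mul_mxblock_mxrow mxcolK.
rewrite (bigD1 0) //= [X in _ + X]big1.
  by rewrite addr0 /Esel /= csubE subr0 Ssel_mul.
by move=> l; rewrite /Esel ordval0 => /negbTE ->; rewrite mulmx0.
Qed.

Lemma Esel_iso n2 q n3 :
  (bcirc (@Esel n2 q n3))^T *m bcirc (@Esel n2 q n3) = 1%:M.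
Proof.
rewrite -bcirc_tr -bcirc_mul -(bcirc_tid n2 n3); apply: bcirc_ext => k.
case: n3 k => [|n] k; first by case: k.
rewrite /tprod /tfold /bcirc /tunfold mul_mxblock_mxrow mxcolK.
rewrite (bigD1 0) //= [X in _ + X]big1.
  rewrite addr0 /Esel /= /ttr csubE subr0 cnegE /tid !ordval0 oppr_eq0.
  by case: (k == 0); rewrite ?Ssel_iso // trmx0 mul0mx.
by move=> l; rewrite /Esel ordval0 => /negbTE ->; rewrite mulmx0.
Qed.

End T.
Lemma logconv (R : realType) (c : nat -> R) : (forall j, 0 <= c j) ->
  (forall j, c j.+1 ^+ 2 <= c j * c j.+2) ->
  forall n, c 1%N ^+ n.+1 <= c n.+1 * c 0%N ^+ n.
Proof.
move=> c0 hc.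
have step : forall j, c 1%N * c j <= c j.+1 * c 0%N.
  elim=> [|j IH]; first by rewrite mulrC.
  have [z|p] := eqVneq (c j) 0.
    have : c j.+1 ^+ 2 <= 0 by rewrite -(mulr0 (c j.+2)) -z mulrC hc.
    move=> h; have -> : c j.+1 = 0.
      by apply/eqP; rewrite -sqrf_eq0 eq_le h sqr_ge0.
    by rewrite mulr0 mulr_ge0.
  have pj : 0 < c j by rewrite lt_neqAle eq_sym p c0.
  rewrite -(ler_pM2l pj).
  have h1 := hc j.
  have h2 : c 1%N * c j * c j.+1 <= c j.+1 * c 0%N * c j.+1.
    by apply: ler_wpM2r; [exact: c0|exact: IH].
  have := c0 j.+1; have := c0 0%N; have := c0 1%N; have := c0 j.+2.
  nra.
elim=> [|n IH]; first by rewrite expr1 expr0 mulr1.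
rewrite exprS.
apply: le_trans (ler_wpM2l (c0 _) IH) _.
rewrite mulrA exprS mulrA.
apply: ler_wpM2r; first exact: exprn_ge0.
exact: step.
Qed.

From mathcomp Require Import zify.
Section Core.
Variable R : realType.

Lemma dot_mulr n m (A : 'M[R]_(n, m)) u v : dot u (A *m v) = dot (A^T *m u) v.
Proof. by rewrite dot_mull trmxK. Qed.

Lemma mpowS N (M : 'M[R]_N) k : mpow M k.+1 = M *m mpow M k.
Proof. by []. Qed.

Lemma mpow_tr N (M : 'M[R]_N) k : M^T = M -> (mpow M k)^T = mpow M k.
Proof.
move=> hM.
have comm : forall j, M *m mpow M j = mpow M j *m M.
  elim=> [|j IH]; first by rewrite /= mulmx1 mul1mx.
  by rewrite mpowS -mulmxA -IH mulmxA.
elim: k => [|k IH]; first by rewrite /= trmx1.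
by rewrite mpowS trmx_mul IH hM comm.
Qed.

Lemma core N p p' q (P : 'M[R]_N) (A : 'M[R]_(N, p)) (Zb : 'M[R]_(N, p'))
  (Em : 'M[R]_(p', p)) :
  P^T = P -> P *m P = P -> Em^T *m Em = 1%:M ->
  Zb *m Em = mpow (A *m A^T) q *m A ->
  mspec (P *m A) <= powR (mspec (P *m Zb)) (1 / (2 * q + 1)%:R).
Proof.
move=> hP hPP hE hZ.
set M := A *m A^T.
have hM : M^T = M by rewrite /M trmx_mul trmxK.
set S := mspec (P *m Zb).
have S0 : 0 <= S := mspec_ge0 _.
apply: mspec_le => v hv.
set w := P *m A *m v.
set r := vnorm w.
have r0 : 0 <= r := vnorm_ge0 _.
have Pw : P *m w = w by rewrite /w !mulmxA hPP.
have [rz|rnz] := eqVneq r 0; first by rewrite rz powR_ge0.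
have rp : 0 < r by rewrite lt_neqAle eq_sym rnz r0.
suff key : r ^+ (2 * q + 1) <= S.
  have -> : r = powR (r ^+ (2 * q + 1)) (1 / (2 * q + 1)%:R).
    rewrite -powR_mulrn // -powRrM mulrC -mulrA mulVf ?mulr1 ?powRr1 //.
    by rewrite pnatr_eq0 addn1.
  apply: ge0_ler_powR => //; first by rewrite mulr_ge0 ?invr_ge0 ?ler0n.
    by rewrite nnegrE exprn_ge0.
set e := fun k => dot (mpow M k *m w) (mpow M k *m w).
set o := fun k => dot (A^T *m (mpow M k *m w)) (A^T *m (mpow M k *m w)).
have F4 : forall k, e k.+1 ^+ 2 <= o k * o k.+1.
  move=> k; rewrite /e /o.
  have -> : dot (mpow M k.+1 *m w) (mpow M k.+1 *m w) =
    dot (A^T *m (mpow M k *m w)) (A^T *m (mpow M k.+1 *m w)).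
    by rewrite -dot_mull mpowS !mulmxA.
  exact: CS.
have F5 : forall k, o k ^+ 2 <= e k * e k.+1.
  move=> k; rewrite /e /o.
  have -> : dot (A^T *m (mpow M k *m w)) (A^T *m (mpow M k *m w)) =
    dot (mpow M k *m w) (mpow M k.+1 *m w).
    by rewrite dot_mull trmxK mpowS !mulmxA.
  exact: CS.
set c := fun j => if odd j then o j./2 else e j./2.
have hc : forall j, c j.+1 ^+ 2 <= c j * c j.+2.
  move=> j; rewrite /c /= uphalf_half.
  case: (odd j) => /=; rewrite ?add1n ?add0n.
    exact: F4.
  exact: F5.
have c0 : forall j, 0 <= c j by move=> j; rewrite /c; case: (odd j); apply: dot_ge0.
have L := logconv c0 hc (2 * q).
have ec0 : c 0%N = r ^+ 2 by rewrite /c /= /e /= mul1mx vnorm_sq.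
have ec1 : c 1%N = o 0%N by [].
have ecn : c (2 * q).+1 = o q.
  by rewrite /c /= uphalf_half oddM /= add0n mul2n doubleK.
rewrite ec0 ec1 ecn in L.
have F2 : r ^+ 4 <= o 0%N.
  have h : r ^+ 2 <= vnorm (A^T *m w).
    rewrite vnorm_sq.
    have -> : dot w w = dot (A^T *m w) v.
      have -> : dot w w = dot w (P *m (A *m v)) by rewrite /w mulmxA.
      by rewrite (dot_mulr P w) hP Pw (dot_mulr A w).
    apply: le_trans (CSn _ _) _.
    by rewrite ler_piMr ?vnorm_ge0.
  have : (r ^+ 2) ^+ 2 <= vnorm (A^T *m w) ^+ 2.
    by rewrite lerXn2r // nnegrE ?exprn_ge0 // (le_trans _ h) // exprn_ge0.
  by rewrite -exprM vnorm_sq /o /= mul1mx.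
have F6 : o q <= r ^+ 2 * S ^+ 2.
  set y := A^T *m (mpow M q *m w).
  have h : vnorm y ^+ 2 <= r * (S * vnorm y).
    rewrite vnorm_sq.
    have -> : dot y y = dot w (P *m (Zb *m (Em *m y))).
      rewrite (mulmxA Zb) hZ (dot_mulr P w) hP Pw -mulmxA (dot_mulr (mpow M q) w).
      by rewrite mpow_tr // (dot_mulr A (mpow M q *m w)).
    apply: le_trans (CSn _ _) _.
    apply: ler_wpM2l => //.
    rewrite mulmxA.
    apply: le_trans (mspec_hom _ _) _.
    by rewrite vnorm_iso.
  have [yz|ynz] := eqVneq (vnorm y) 0.
    by rewrite /o -/y -vnorm_sq yz expr0n mulr_ge0 // exprn_ge0.
  have yp : 0 < vnorm y by rewrite lt_neqAle eq_sym ynz vnorm_ge0.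
  have h2 : vnorm y <= r * S.
    by rewrite -(ler_pM2r yp) -mulrA -expr2.
  rewrite /o -/y -vnorm_sq -exprMn lerXn2r // nnegrE ?vnorm_ge0 ?mulr_ge0 //.
have ap : 0 < r ^+ (2 * q + 1) by rewrite exprn_gt0.
set a := r ^+ (2 * q + 1) in ap *.
have e4 : (r ^+ 4) ^+ (2 * q).+1 = a ^+ 4.
  by rewrite /a -!exprM; congr (_ ^+ _); lia.
have e2 : r ^+ 2 ^+ (2 * q) * r ^+ 2 = a ^+ 2.
  by rewrite /a -!exprM -exprD; congr (_ ^+ _); lia.
have H : a ^+ 4 <= S ^+ 2 * a ^+ 2.
  rewrite -e4 -e2.
  have h1 : (r ^+ 4) ^+ (2 * q).+1 <= o 0%N ^+ (2 * q).+1.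
    by apply: lerXn2r; rewrite ?nnegrE ?exprn_ge0 // (le_trans _ F2) // exprn_ge0.
  apply: (le_trans h1); apply: (le_trans L).
  have X0 : 0 <= r ^+ 2 ^+ (2 * q) by rewrite !exprn_ge0.
  have := ler_wpM2r X0 F6.
  move=> h; apply: (le_trans h); rewrite le_eqVlt; apply/orP; left; apply/eqP; ring.
have a2p : 0 < a ^+ 2 by rewrite exprn_gt0.
have H2 : a ^+ 2 <= S ^+ 2.
  by rewrite -(ler_pM2r a2p) -expr2 -exprM.
by move: H2; rewrite ler_pXn2r // nnegrE ?S0 ?ltW.
Qed.

End Core.

Unset Implicit Arguments.
Theorem theorem1 (R : realType) (n1 n2 n3 s q m : nat)
  (X : tensor R n1 n2 n3) (B : tensor R n2 s n3)
  (Q : tensor R n1 m n3) (Rf : tensor R m (\sum_(j < q.+1) s) n3) :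
  let XXt := tprod X (ttr X) in
  let K := tcat (fun j : 'I_q.+1 => tprod (tprod (tpow XXt j) X) B) in
  let Z := tcat (fun j : 'I_q.+1 => tprod (tpow XXt j) X) in
  let Pk := tprod Q (ttr Q) in
  K = tprod Q Rf ->
  tprod (ttr Q) Q = @tid R m n3 ->
  upper_slices Rf ->
  tspec (tprod (tsub (@tid R n1 n3) (tprod Q (ttr Q))) X)
    <= powR (tspec (tprod (tsub (@tid R n1 n3) Pk) Z)) (1 / (2 * q + 1)%:R).
Proof.
move=> XXt K Z Pk _ hQ _.
have hQ' : (bcirc Q)^T *m bcirc Q = 1%:M.
  by rewrite -bcirc_tr -bcirc_mul hQ bcirc_tid.
rewrite /tspec /Pk !bcirc_mul bcirc_sub bcirc_tid bcirc_mul bcirc_tr.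
apply: (@core _ _ _ _ q _ _ _ (bcirc (@Esel R n2 q n3))).
- by rewrite linearB /= trmx1 trmx_mul trmxK.
- rewrite mulmxBl mul1mx mulmxBr mulmx1 -mulmxA (mulmxA (bcirc Q)^T) hQ' mul1mx.
  by rewrite subrr subr0.
- exact: Esel_iso.
- rewrite -bcirc_mul (bcirc_ext (tcat_sel _)) /= bcirc_mul bcirc_pow /XXt.
  by rewrite bcirc_mul bcirc_tr.
Qed.
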